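(* Let $Y$ be a first-countable topological space such that $\mathrm{H}_1([0,1],Y)\subseteq \mathrm{B}_1([0,1],Y)$. Then $Y$ is almost arcwise connected and locally almost arcwise connected.
   Context: $\mathrm{H}_1(X,Y)$: mappings $f:X\to Y$ with $f^{-1}(V)$ an $F_\sigma$-set for every open $V\subseteq Y$. $\mathrm{B}_1(X,Y)$: pointwise limits of sequences of continuous mappings $X\to Y$. Two sets $A,B$ are joined by an arc in a set $S$ if there is a continuous $\gamma:[0,1]\to Y$ with $\gamma([0,1])\subseteq S$, $\gamma(0)\in A$, $\gamma(1)\in B$. $Y$ is almost arcwise connected if each pair of nonempty open subsets of $Y$ can be joined by an arc in $Y$. $Y$ is locally almost arcwise connected at $y$ if for every neighborhood $V$ of $y$ there is a neighborhood $U\subseteq V$ of $y$ such that each pair of nonempty open subsets of $U$ can be joined by an arc in $\overline V$; locally almost arcwise connected means this holds at every point. *)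

(* Defs.v *)
From Stdlib Require Import Reals.
Open Scope R_scope.

Record topology (T : Type) := Topology {
  open : (T -> Prop) -> Prop;
  open_full : open (fun _ => True);
  open_inter : forall U V, open U -> open V -> open (fun x => U x /\ V x);
  open_union : forall F : (T -> Prop) -> Prop,
      (forall U, F U -> open U) -> open (fun x => exists U, F U /\ U x)
}.
Arguments open {T} t U.

Definition first_countable {Y : Type} (tY : topology Y) : Prop :=
  forall y : Y, exists B : nat -> (Y -> Prop),
    (forall n, open tY (B n) /\ B n y) /\
    (forall U, open tY U -> U y -> exists n, forall z, B n z -> U z).

Definition I01 : Type := { x : R | 0 <= x <= 1 }.

Definition open01 (U : I01 -> Prop) : Prop :=
  forall x : I01, U x -> exists eps : R, eps > 0 /\
    forall t : I01, Rabs (proj1_sig t - proj1_sig x) < eps -> U t.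

Definition closed01 (C : I01 -> Prop) : Prop := open01 (fun x => ~ C x).

Definition Fsigma01 (A : I01 -> Prop) : Prop :=
  exists C : nat -> (I01 -> Prop), (forall n, closed01 (C n)) /\
    forall x, A x <-> exists n, C n x.

Definition continuous01 {Y : Type} (tY : topology Y) (f : I01 -> Y) : Prop :=
  forall V, open tY V -> open01 (fun x => V (f x)).

Definition converges {Y : Type} (tY : topology Y) (u : nat -> Y) (l : Y) : Prop :=
  forall V, open tY V -> V l -> exists N, forall n, (n >= N)%nat -> V (u n).

Definition Hclass1 {Y : Type} (tY : topology Y) (f : I01 -> Y) : Prop :=
  forall V, open tY V -> Fsigma01 (fun x => V (f x)).

Definition Bclass1 {Y : Type} (tY : topology Y) (f : I01 -> Y) : Prop :=
  exists fn : nat -> I01 -> Y, (forall n, continuous01 tY (fn n)) /\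
    forall x, converges tY (fun n => fn n x) (f x).

Definition joined_by_arc_in {Y : Type} (tY : topology Y)
    (A B S : Y -> Prop) : Prop :=
  exists gamma : I01 -> Y, continuous01 tY gamma /\
    (forall t, S (gamma t)) /\
    (exists t0 : I01, proj1_sig t0 = 0 /\ A (gamma t0)) /\
    (exists t1 : I01, proj1_sig t1 = 1 /\ B (gamma t1)).

Definition nonempty {Y : Type} (A : Y -> Prop) : Prop := exists y, A y.

Definition almost_arcwise_connected {Y : Type} (tY : topology Y) : Prop :=
  forall A B, open tY A -> nonempty A -> open tY B -> nonempty B ->
    joined_by_arc_in tY A B (fun _ => True).

Definition nbhd {Y : Type} (tY : topology Y) (V : Y -> Prop) (y : Y) : Prop :=
  exists W, open tY W /\ W y /\ forall z, W z -> V z.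

Definition closure {Y : Type} (tY : topology Y) (V : Y -> Prop) : Y -> Prop :=
  fun z => forall W, open tY W -> W z -> exists w, W w /\ V w.

Definition loc_almost_arcwise_connected_at {Y : Type} (tY : topology Y)
    (y : Y) : Prop :=
  forall V, nbhd tY V y -> exists U, nbhd tY U y /\ (forall z, U z -> V z) /\
    forall A B, open tY A -> nonempty A -> (forall z, A z -> U z) ->
                open tY B -> nonempty B -> (forall z, B z -> U z) ->
      joined_by_arc_in tY A B (closure tY V).

Definition loc_almost_arcwise_connected {Y : Type} (tY : topology Y) : Prop :=
  forall y, loc_almost_arcwise_connected_at tY y.

(* Main.v *)
Require Import Defs.
From Stdlib Require Import Reals Lra Lia List Classical ClassicalEpsilon ProofIrrelevance Cantor ZArith.
Open Scope R_scope.

Lemma I01_eq (x y : I01) : proj1_sig x = proj1_sig y -> x = y.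
Proof. destruct x as [x hx], y as [y hy]; simpl; intros ->. f_equal. apply proof_irrelevance. Qed.

Lemma Fsigma_ext (A A' : I01 -> Prop) : Fsigma01 A -> (forall x, A x <-> A' x) -> Fsigma01 A'.
Proof. intros [C [HC HA]] H. exists C. split; auto. intro x. rewrite <- H. apply HA. Qed.

Lemma avoid1 (x p : R) (c : Prop) : ~ (x = p /\ c) ->
  exists e, e > 0 /\ forall t, Rabs (t - x) < e -> ~ (t = p /\ c).
Proof.
  intros H. destruct (classic c) as [Hc|Hc].
  - assert (x <> p) by tauto. exists (Rabs (x - p)). split. apply Rabs_pos_lt; lra.
    intros t Ht [E _]. subst t. rewrite Rabs_minus_sym in Ht. lra.
  - exists 1. split; [lra|]. tauto.
Qed.

Lemma closed_pt2 (p q : R) (c d : Prop) :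
  closed01 (fun x => (proj1_sig x = p /\ c) \/ (proj1_sig x = q /\ d)).
Proof.
  intros x Hx.
  destruct (avoid1 (proj1_sig x) p c) as [e1 [He1 H1]]; [tauto|].
  destruct (avoid1 (proj1_sig x) q d) as [e2 [He2 H2]]; [tauto|].
  exists (Rmin e1 e2). split. unfold Rmin; destruct Rle_dec; lra.
  intros t Ht [Ht'|Ht'].
  - apply (H1 (proj1_sig t)); auto. pose proof (Rmin_l e1 e2); lra.
  - apply (H2 (proj1_sig t)); auto. pose proof (Rmin_r e1 e2); lra.
Qed.

Lemma Fsigma_countable (p q : nat -> R) (c d : nat -> Prop) :
  Fsigma01 (fun x => exists n, (proj1_sig x = p n /\ c n) \/ (proj1_sig x = q n /\ d n)).
Proof.
  exists (fun n x => (proj1_sig x = p n /\ c n) \/ (proj1_sig x = q n /\ d n)).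
  split. intro; apply closed_pt2. intro; reflexivity.
Qed.

Lemma small_inv (e : R) : e > 0 -> exists j : nat, / INR (S j) <= e.
Proof.
  intros He. destruct (archimed_cor1 e He) as [N [H1 H2]].
  exists (pred N). replace (S (pred N)) with N by lia. lra.
Qed.

Lemma finite_min (x : R) (N : nat) (p q : nat -> R) (c d : nat -> Prop) :
  (forall n, (n < N)%nat -> (c n -> x <> p n) /\ (d n -> x <> q n)) ->
  exists e, e > 0 /\ forall n, (n < N)%nat ->
     (c n -> Rabs (x - p n) >= e) /\ (d n -> Rabs (x - q n) >= e).
Proof.
  induction N; intros H.
  - exists 1; split; [lra | intros; lia].
  - destruct IHN as [e [He HnI]]. { intros n Hn0; apply H; lia. }
    destruct (H N (Nat.lt_succ_diag_r N)) as [H1 H2].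
    assert (E1: exists e1, e1 > 0 /\ (c N -> Rabs (x - p N) >= e1)).
    { destruct (classic (c N)) as [Hc|Hc].
      - exists (Rabs (x - p N)). split. apply Rabs_pos_lt. specialize (H1 Hc). lra. lra.
      - exists 1. split; [lra| tauto]. }
    assert (E2: exists e2, e2 > 0 /\ (d N -> Rabs (x - q N) >= e2)).
    { destruct (classic (d N)) as [Hc|Hc].
      - exists (Rabs (x - q N)). split. apply Rabs_pos_lt. specialize (H2 Hc). lra. lra.
      - exists 1. split; [lra| tauto]. }
    destruct E1 as [e1 [He1 G1]], E2 as [e2 [He2 G2]].
    exists (Rmin e (Rmin e1 e2)). split. unfold Rmin; repeat destruct Rle_dec; lra.
    pose proof (Rmin_l e (Rmin e1 e2)). pose proof (Rmin_r e (Rmin e1 e2)).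
    pose proof (Rmin_l e1 e2). pose proof (Rmin_r e1 e2).
    intros n Hn. destruct (Nat.eq_dec n N) as [->|Hne].
    + split; intros Hc; [specialize (G1 Hc)|specialize (G2 Hc)]; lra.
    + assert (n < N)%nat by lia. destruct (HnI n H6) as [K1 K2].
      split; intros Hc; [specialize (K1 Hc)|specialize (K2 Hc)]; lra.
Qed.

Lemma Fsigma_cofinite (N : nat) (p q : nat -> R) (c d : nat -> Prop) :
  Fsigma01 (fun x => forall n, (n < N)%nat ->
     (c n -> proj1_sig x <> p n) /\ (d n -> proj1_sig x <> q n)).
Proof.
  exists (fun j x => forall n, (n < N)%nat ->
     (c n -> Rabs (proj1_sig x - p n) >= / INR (S j)) /\
     (d n -> Rabs (proj1_sig x - q n) >= / INR (S j))).
  split.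
  - intros j x Hx.
    apply not_all_ex_not in Hx as [n Hn].
    apply imply_to_and in Hn as [HnN Hn].
    set (dl := / INR (S j)) in *.
    destruct (classic (c n /\ Rabs (proj1_sig x - p n) < dl)) as [[Hc Hlt]|Hno1].
    + exists (dl - Rabs (proj1_sig x - p n)). split. lra.
      intros t Ht Hall. destruct (Hall n HnN) as [K1 _]. specialize (K1 Hc).
      pose proof (Rabs_triang (proj1_sig t - proj1_sig x) (proj1_sig x - p n)) as T.
      replace (proj1_sig t - proj1_sig x + (proj1_sig x - p n)) with (proj1_sig t - p n) in T by ring. lra.
    + destruct (classic (d n /\ Rabs (proj1_sig x - q n) < dl)) as [[Hc Hlt]|Hno2].
      * exists (dl - Rabs (proj1_sig x - q n)). split. lra.
        intros t Ht Hall. destruct (Hall n HnN) as [_ K1]. specialize (K1 Hc).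
        pose proof (Rabs_triang (proj1_sig t - proj1_sig x) (proj1_sig x - q n)) as T.
        replace (proj1_sig t - proj1_sig x + (proj1_sig x - q n)) with (proj1_sig t - q n) in T by ring. lra.
      * exfalso. apply Hn. split; intros Hc.
        -- apply Rnot_lt_ge. intro. apply Hno1; auto.
        -- apply Rnot_lt_ge. intro. apply Hno2; auto.
  - intros x. split.
    + intros Hx. destruct (finite_min (proj1_sig x) N p q c d Hx) as [e [He He']].
      destruct (small_inv e He) as [j Hj]. exists j. intros n Hn.
      destruct (He' n Hn) as [K1 K2]. split; intros Hc; [specialize (K1 Hc)|specialize (K2 Hc)]; lra.
    + intros [j Hj] n HnN. assert (Hp : / INR (S j) > 0).
      { apply Rinv_0_lt_compat. apply lt_0_INR. lia. }
      destruct (Hj n HnN) as [K1 K2].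
      split; intros Hc E; [specialize (K1 Hc)|specialize (K2 Hc)];
        rewrite E, Rminus_diag, Rabs_R0 in *; lra.
Qed.

Fixpoint nest (G : nat -> R -> R -> R*R) (n : nat) : R*R :=
  match n with O => (0,1) | S k => G k (fst (nest G k)) (snd (nest G k)) end.

Lemma baire (E : nat -> I01 -> Prop) :
  (forall k, closed01 (E k)) -> (forall x, exists k, E k x) ->
  exists k l r, 0 <= l < r /\ r <= 1 /\ forall x : I01, l <= proj1_sig x <= r -> E k x.
Proof.
  intros HC Hcov. apply NNPP; intro Hno.
  assert (Hstep : forall k l r, exists pr : R * R, 0 <= l < r /\ r <= 1 ->
     l <= fst pr < snd pr /\ snd pr <= r /\
     forall x : I01, fst pr <= proj1_sig x <= snd pr -> ~ E k x).
  { intros k l r. destruct (classic (0 <= l < r /\ r <= 1)) as [Hlr|Hlr]; [| exists (0,0); tauto].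
    assert (Hx: exists x : I01, l <= proj1_sig x <= r /\ ~ E k x).
    { apply NNPP; intro Hx. apply Hno. exists k, l, r. split; [tauto|split; [tauto|]].
      intros x Hx'. apply NNPP; intro HE. apply Hx. exists x; auto. }
    destruct Hx as [x [Hxlr HEx]]. destruct (HC k x HEx) as [e [He He']].
    exists (Rmax l (proj1_sig x - e/2), Rmin r (proj1_sig x + e/2)). intros _. simpl.
    split; [|split].
    - split. apply Rmax_l. unfold Rmax, Rmin; destruct Rle_dec; destruct Rle_dec; lra.
    - apply Rmin_l.
    - intros t [Ht1 Ht2]. apply He'.
      pose proof (Rmax_r l (proj1_sig x - e/2)). pose proof (Rmin_r r (proj1_sig x + e/2)).
      apply Rabs_def1; lra. }
  set (G := fun k l r => proj1_sig (constructive_indefinite_description _ (Hstep k l r))).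
  assert (HG : forall k l r, 0 <= l < r /\ r <= 1 ->
     l <= fst (G k l r) < snd (G k l r) /\ snd (G k l r) <= r /\
     forall x : I01, fst (G k l r) <= proj1_sig x <= snd (G k l r) -> ~ E k x).
  { intros k l r. unfold G. destruct (constructive_indefinite_description _ _) as [pr Hpr]. exact Hpr. }
  clearbody G.
  assert (Hinv : forall n, 0 <= fst (nest G n) < snd (nest G n) /\ snd (nest G n) <= 1).
  { induction n; simpl. lra. destruct (HG n _ _ IHn) as [A [B _]]. lra. }
  assert (Hmono : forall n m, (n <= m)%nat -> fst (nest G n) <= fst (nest G m) /\ snd (nest G m) <= snd (nest G n)).
  { intros n m Hnm. induction Hnm. lra. simpl. destruct (HG m _ _ (Hinv m)) as [A [B _]]. lra. }
  assert (Hlr : forall i j, fst (nest G i) <= snd (nest G j)).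
  { intros i j. destruct (Nat.le_ge_cases i j) as [H|H].
    - destruct (Hmono i j H). destruct (Hinv j). lra.
    - destruct (Hmono j i H). destruct (Hinv i). lra. }
  destruct (completeness (fun z => exists n, z = fst (nest G n))) as [m [Hub Hlub]].
  { exists 1. intros z [n ->]. destruct (Hinv n). lra. }
  { exists (fst (nest G 0)). eauto. }
  assert (Hm1 : forall n, fst (nest G n) <= m). { intro n. apply Hub. eauto. }
  assert (Hm2 : forall n, m <= snd (nest G n)).
  { intro n. apply Hlub. intros z [i ->]. apply Hlr. }
  assert (Hm01 : 0 <= m <= 1).
  { pose proof (Hm1 O). pose proof (Hm2 O). simpl in *. lra. }
  destruct (Hcov (exist _ m Hm01)) as [k Hk].
  destruct (HG k _ _ (Hinv k)) as [_ [_ HH]].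
  apply (HH (exist _ m Hm01)); auto.
  simpl. split; [apply (Hm1 (S k)) | apply (Hm2 (S k))].
Qed.

Definition Jint (n : nat) : R * R :=
  let (k, j) := Cantor.of_nat n in
  if le_lt_dec (S j) (S k) then (INR j * / INR (S k), INR (S j) * / INR (S k)) else (0, 1).

Lemma mul_inv_le a b s : 0 < s -> (a * / s <= b <-> a <= b * s).
Proof.
  intros Hs. replace a with ((a * / s) * s) at 2 by (field; lra).
  split; intro H. apply Rmult_le_compat_r; lra. apply (Rmult_le_reg_r s); lra.
Qed.
Lemma mul_inv_ge a b s : 0 < s -> (b <= a * / s <-> b * s <= a).
Proof.
  intros Hs. replace a with ((a * / s) * s) at 2 by (field; lra).
  split; intro H. apply Rmult_le_compat_r; lra. apply (Rmult_le_reg_r s); lra.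
Qed.
Lemma mul_inv_lt a b s : 0 < s -> a < b -> a * / s < b * / s.
Proof. intros Hs H. apply Rmult_lt_compat_r; [apply Rinv_0_lt_compat|]; lra. Qed.

Lemma Jint_ok n : 0 <= fst (Jint n) < snd (Jint n) /\ snd (Jint n) <= 1.
Proof.
  unfold Jint. destruct (Cantor.of_nat n) as [k j].
  destruct (le_lt_dec (S j) (S k)) as [H|H]; cbn [fst snd]; [|lra].
  assert (Hs : 0 < INR (S k)) by (apply lt_0_INR; lia).
  pose proof (pos_INR j).
  assert (INR (S j) <= INR (S k)) by (apply le_INR; lia).
  repeat rewrite S_INR in *.
  split; [split|].
  - apply mul_inv_ge; lra.
  - apply mul_inv_lt; lra.
  - apply mul_inv_le; lra.
Qed.

Lemma Jint_dense l r : 0 <= l < r -> r <= 1 ->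
  exists n, l <= fst (Jint n) /\ snd (Jint n) <= r.
Proof.
  intros Hl Hr.
  destruct (archimed_cor1 ((r - l)/2)) as [N [HN HN0]]; [lra|].
  set (s := INR N).
  assert (Hs : 0 < s) by (apply lt_0_INR; lia).
  assert (Hs2 : 2 < (r - l) * s).
  { assert (/ s * s = 1) by (field; lra).
    assert (/ s * s < (r - l) / 2 * s) . { apply Rmult_lt_compat_r; [lra|exact HN]. } assert ((r - l) / 2 * s = (r - l) * s / 2) by field. lra. }
  destruct (archimed (l * s)) as [A1 A2].
  set (z := up (l * s)) in *.
  assert (Hz : (0 <= z)%Z).
  { apply le_IZR. assert (0 <= l * s) by (apply Rmult_le_pos; lra). lra. }
  set (j := Z.to_nat z).
  assert (Hj : INR j = IZR z) by (unfold j; rewrite INR_IZR_INZ, Z2Nat.id; auto).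
  assert (Hjk : (S j < N)%nat).
  { apply INR_lt. rewrite S_INR, Hj. fold s. assert (l * s + 2 < s) by nra. lra. }
  exists (Cantor.to_nat (pred N, j)).
  unfold Jint. rewrite Cantor.cancel_of_to.
  replace (S (pred N)) with N by lia. fold s.
  destruct (le_lt_dec (S j) N) as [H|H]; [|lia]. cbn [fst snd].
  rewrite S_INR, Hj. split.
  - apply mul_inv_ge; lra.
  - apply mul_inv_le; nra.
Qed.

Lemma avoid_list (L : list R) : forall l r, l < r ->
  exists l' r', l <= l' < r' /\ r' <= r /\ forall x, l' <= x <= r' -> ~ In x L.
Proof.
  induction L as [|z L IH]; intros l r Hlr.
  - exists l, r. split; [lra|]. split; [lra|]. intros x _ [].
  - destruct (IH l r Hlr) as [l1 [r1 [H1 [H2 H3]]]].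
    destruct (Rlt_le_dec z ((l1 + r1)/2)).
    + exists ((l1 + r1)/2), r1. split; [lra|]. split; [lra|].
      intros x Hx [E|E]. subst; lra. apply (H3 x); [lra|auto].
    + exists l1, ((l1 + (l1 + r1)/2)/2). split; [lra|]. split; [lra|].
      intros x Hx [E|E]. subst; lra. apply (H3 x); [lra|auto].
Qed.

Lemma pick_pts (n : nat) (L : list R) : exists pq : R * R,
  fst (Jint n) <= fst pq <= snd (Jint n) /\ fst (Jint n) <= snd pq <= snd (Jint n) /\
  fst pq <> snd pq /\ ~ In (fst pq) L /\ ~ In (snd pq) L.
Proof.
  destruct (Jint_ok n) as [[H0 H1] H2].
  destruct (avoid_list L _ _ H1) as [l' [r' [A [B C]]]].
  exists (l', r'); simpl. repeat split; try lra.
  apply C; lra. apply C; lra.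
Qed.

Definition pickF n L := proj1_sig (constructive_indefinite_description _ (pick_pts n L)).

Lemma pickF_spec n L :
  fst (Jint n) <= fst (pickF n L) <= snd (Jint n) /\ fst (Jint n) <= snd (pickF n L) <= snd (Jint n) /\
  fst (pickF n L) <> snd (pickF n L) /\ ~ In (fst (pickF n L)) L /\ ~ In (snd (pickF n L)) L.
Proof. unfold pickF. destruct (constructive_indefinite_description _ _) as [pq H]. exact H. Qed.

Fixpoint hist (n : nat) : list R :=
  match n with O => nil
  | S k => fst (pickF k (hist k)) :: snd (pickF k (hist k)) :: hist k end.

Definition Pp n := fst (pickF n (hist n)).
Definition Qp n := snd (pickF n (hist n)).

Lemma hist_in n m : (m < n)%nat -> In (Pp m) (hist n) /\ In (Qp m) (hist n).
Proof.
  induction n; intros H; [lia|].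
  change (hist (S n)) with (Pp n :: Qp n :: hist n).
  destruct (Nat.eq_dec m n) as [->|Hne].
  - simpl; auto.
  - destruct IHn as [A B]; [lia|]. simpl; auto.
Qed.

Lemma Pp_range n : 0 <= Pp n <= 1.
Proof. destruct (pickF_spec n (hist n)) as [A _]. destruct (Jint_ok n). unfold Pp; lra. Qed.
Lemma Qp_range n : 0 <= Qp n <= 1.
Proof. destruct (pickF_spec n (hist n)) as [_ [A _]]. destruct (Jint_ok n). unfold Qp; lra. Qed.

Lemma not_hist_P n : ~ In (Pp n) (hist n).
Proof. apply (pickF_spec n (hist n)). Qed.
Lemma not_hist_Q n : ~ In (Qp n) (hist n).
Proof. apply (pickF_spec n (hist n)). Qed.

Lemma Pp_inj n m : Pp n = Pp m -> n = m.
Proof.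
  intros E. destruct (Nat.lt_total n m) as [H|[H|H]]; auto; exfalso.
  - apply (not_hist_P m). rewrite <- E. apply hist_in; auto.
  - apply (not_hist_P n). rewrite E. apply hist_in; auto.
Qed.
Lemma Qp_inj n m : Qp n = Qp m -> n = m.
Proof.
  intros E. destruct (Nat.lt_total n m) as [H|[H|H]]; auto; exfalso.
  - apply (not_hist_Q m). rewrite <- E. apply hist_in; auto.
  - apply (not_hist_Q n). rewrite E. apply hist_in; auto.
Qed.
Lemma PQ_diff n m : Pp n <> Qp m.
Proof.
  intros E. destruct (Nat.lt_total n m) as [H|[H|H]].
  - apply (not_hist_Q m). rewrite <- E. apply hist_in; auto.
  - subst. destruct (pickF_spec m (hist m)) as [_ [_ [X _]]]. exact (X E).
  - apply (not_hist_P n). rewrite E. apply hist_in; auto.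
Qed.

Lemma PQ_dense l r : 0 <= l < r -> r <= 1 ->
  exists n, l <= Pp n <= r /\ l <= Qp n <= r.
Proof.
  intros H1 H2. destruct (Jint_dense l r H1 H2) as [n [A B]].
  exists n. destruct (pickF_spec n (hist n)) as [C [D _]]. unfold Pp, Qp. lra.
Qed.

Section Top.
Context {Y : Type} (tY : topology Y).

Definition Ocl (V : Y -> Prop) : Y -> Prop :=
  fun z => exists U, (open tY U /\ forall w, U w -> ~ V w) /\ U z.

Lemma Ocl_open V : open tY (Ocl V).
Proof. apply open_union. intros U [H _]; exact H. Qed.

Lemma Ocl_iff V z : ~ closure tY V z <-> Ocl V z.
Proof.
  split.
  - intros H. apply not_all_ex_not in H as [W HW].
    apply imply_to_and in HW as [HWo HW]. apply imply_to_and in HW as [HWz HW].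
    exists W. split; [split|]; auto. intros w Hw HV. apply HW. eauto.
  - intros [U [[HUo HU] HUz]] Hc. destruct (Hc U HUo HUz) as [w [A B]]. exact (HU w A B).
Qed.

Lemma closure_sup V z : V z -> closure tY V z.
Proof. intros H W _ Hw. eauto. Qed.

Definition affI (p q : R) (hp : 0 <= p <= 1) (hq : 0 <= q <= 1) (t : I01) : I01.
Proof.
  refine (exist _ (p + proj1_sig t * (q - p)) _).
  destruct t as [t ht]; simpl. nra.
Defined.

Lemma aff_between lo hi p q t : lo <= p <= hi -> lo <= q <= hi -> 0 <= t <= 1 ->
  lo <= p + t * (q - p) <= hi.
Proof. intros. nra. Qed.

Lemma cont_aff (g : I01 -> Y) p q hp hq :
  continuous01 tY g -> continuous01 tY (fun t => g (affI p q hp hq t)).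
Proof.
  intros Hg O HO t Ht.
  destruct (Hg O HO _ Ht) as [e [He He']].
  set (c := Rabs (q - p) + 1).
  assert (Hc : 0 < c) by (pose proof (Rabs_pos (q - p)); unfold c; lra).
  exists (e / c). split. apply Rdiv_lt_0_compat; lra.
  intros s Hs. apply He'. simpl.
  replace (p + proj1_sig s * (q - p) - (p + proj1_sig t * (q - p)))
    with ((proj1_sig s - proj1_sig t) * (q - p)) by ring.
  rewrite Rabs_mult.
  assert (Rabs (proj1_sig s - proj1_sig t) * c < e).
  { replace e with (e / c * c) by (field; lra). apply Rmult_lt_compat_r; lra. }
  assert (Rabs (proj1_sig s - proj1_sig t) * Rabs (q - p) <= Rabs (proj1_sig s - proj1_sig t) * c).
  { apply Rmult_le_compat_l. apply Rabs_pos. unfold c; lra. }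
  lra.
Qed.

End Top.

Lemma global_part (Y : Type) (tY : topology Y) :
  (forall f : I01 -> Y, Hclass1 tY f -> Bclass1 tY f) -> almost_arcwise_connected tY.
Proof.
  intros HHB A B HA [a Ha] HB [b Hb].
  set (f := fun x : I01 => match excluded_middle_informative (proj1_sig x = 0) with
                           | left _ => a | right _ => b end).
  assert (Hf : Hclass1 tY f).
  { intros Ov HO. destruct (classic (Ov a)) as [Ha'|Ha']; destruct (classic (Ov b)) as [Hb'|Hb'].
    - apply (Fsigma_ext _ _ (Fsigma_cofinite 0 (fun _ => 0) (fun _ => 0) (fun _ => True) (fun _ => True))).
      intros x. split; intros _. unfold f; destruct excluded_middle_informative; auto. intros; lia.
    - apply (Fsigma_ext _ _ (Fsigma_countable (fun _ => 0) (fun _ => 0) (fun _ => True) (fun _ => False))).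
      intros x. unfold f; destruct excluded_middle_informative as [E|E]; split; intro H.
      + exact Ha'.
      + exists O%nat; tauto.
      + destruct H as [n [[E' _]|[_ []]]]; contradiction.
      + contradiction.
    - apply (Fsigma_ext _ _ (Fsigma_cofinite 1 (fun _ => 0) (fun _ => 0) (fun _ => True) (fun _ => False))).
      intros x. unfold f; destruct excluded_middle_informative as [E|E]; split; intro H.
      + exfalso. destruct (H O%nat) as [H1 _]; [lia|]. exact (H1 I E).
      + contradiction.
      + exact Hb'.
      + intros n _. split; auto.
    - apply (Fsigma_ext _ _ (Fsigma_countable (fun _ => 0) (fun _ => 0) (fun _ => False) (fun _ => False))).
      intros x. unfold f; destruct excluded_middle_informative as [E|E]; split; intro H;
        try (destruct H as [n [[_ []]|[_ []]]]); contradiction. }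
  destruct (HHB f Hf) as [fn [Hc Hconv]].
  assert (h0 : 0 <= 0 <= 1) by lra. assert (h1 : 0 <= 1 <= 1) by lra.
  set (x0 := exist (fun x => 0 <= x <= 1) 0 h0). set (x1 := exist (fun x => 0 <= x <= 1) 1 h1).
  assert (f x0 = a) by (unfold f; destruct excluded_middle_informative as [E|E]; simpl in *; [auto|lra]).
  assert (f x1 = b) by (unfold f; destruct excluded_middle_informative as [E|E]; simpl in *; [lra|auto]).
  destruct (Hconv x0 A HA) as [M1 HM1]. { rewrite H; auto. }
  destruct (Hconv x1 B HB) as [M2 HM2]. { rewrite H0; auto. }
  exists (fn (max M1 M2)). split; [apply Hc|]. split; [auto|]. split.
  - exists x0. split; [reflexivity|]. apply HM1; lia.
  - exists x1. split; [reflexivity|]. apply HM2; lia.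
Qed.

Fixpoint Udec {Y : Type} (W : Y -> Prop) (Bs : nat -> Y -> Prop) (n : nat) : Y -> Prop :=
  match n with
  | O => fun z => W z /\ Bs O z
  | S k => fun z => Udec W Bs k z /\ Bs (S k) z
  end.

Lemma Udec_props {Y : Type} (tY : topology Y) W Bs y :
  open tY W -> W y -> (forall n, open tY (Bs n) /\ Bs n y) ->
  forall n, open tY (Udec W Bs n) /\ Udec W Bs n y /\
    (forall z, Udec W Bs n z -> W z) /\ (forall z, Udec W Bs n z -> Bs n z).
Proof.
  intros HW Hy HB. induction n; simpl.
  - destruct (HB O). repeat split; try tauto. apply open_inter; auto.
  - destruct (HB (S n)). destruct IHn as [A [B [C D]]]. repeat split; try tauto.
    apply open_inter; auto. intros z [Z _]; auto.
Qed.

Lemma Udec_anti {Y : Type} W Bs (z : Y) n m : (n <= m)%nat -> Udec W Bs m z -> Udec W Bs n z.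
Proof. intros H. induction H; simpl; tauto. Qed.

Definition fdef {Y : Type} (a b : nat -> Y) (y : Y) (x : I01) : Y :=
  match excluded_middle_informative (exists n, proj1_sig x = Pp n) with
  | left H => a (proj1_sig (constructive_indefinite_description _ H))
  | right _ => match excluded_middle_informative (exists n, proj1_sig x = Qp n) with
     | left H => b (proj1_sig (constructive_indefinite_description _ H))
     | right _ => y end end.

Lemma fdef_P {Y : Type} a b (y : Y) x n : proj1_sig x = Pp n -> fdef a b y x = a n.
Proof.
  intros E. unfold fdef. destruct excluded_middle_informative as [H|H].
  - destruct constructive_indefinite_description as [m Hm]; simpl.
    f_equal. apply Pp_inj. congruence.
  - exfalso; eauto.
Qed.

Lemma fdef_Q {Y : Type} a b (y : Y) x n : proj1_sig x = Qp n -> fdef a b y x = b n.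
Proof.
  intros E. unfold fdef. destruct excluded_middle_informative as [H|H].
  - exfalso. destruct H as [m Hm]. apply (PQ_diff m n). congruence.
  - destruct excluded_middle_informative as [H'|H'].
    + destruct constructive_indefinite_description as [m Hm]; simpl.
      f_equal. apply Qp_inj. congruence.
    + exfalso; eauto.
Qed.

Lemma fdef_y {Y : Type} a b (y : Y) x :
  (forall n, proj1_sig x <> Pp n) -> (forall n, proj1_sig x <> Qp n) -> fdef a b y x = y.
Proof.
  intros H1 H2. unfold fdef. destruct excluded_middle_informative as [H|H].
  - exfalso. destruct H as [m Hm]. eapply H1; eauto.
  - destruct excluded_middle_informative as [H'|H'].
    + exfalso. destruct H' as [m Hm]. eapply H2; eauto.
    + reflexivity.
Qed.

Lemma fdef_cases {Y : Type} a b (y : Y) x :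
  (exists n, proj1_sig x = Pp n /\ fdef a b y x = a n) \/
  (exists n, proj1_sig x = Qp n /\ fdef a b y x = b n) \/
  ((forall n, proj1_sig x <> Pp n) /\ (forall n, proj1_sig x <> Qp n) /\ fdef a b y x = y).
Proof.
  destruct (classic (exists n, proj1_sig x = Pp n)) as [[n Hn]|H1].
  - left. exists n. split; auto. apply fdef_P; auto.
  - destruct (classic (exists n, proj1_sig x = Qp n)) as [[n Hn]|H2].
    + right; left. exists n. split; auto. apply fdef_Q; auto.
    + right; right. repeat split; try (intros n E; eauto). apply fdef_y; intros n E; eauto.
Qed.

Lemma local_part (Y : Type) (tY : topology Y) :
  first_countable tY -> (forall f : I01 -> Y, Hclass1 tY f -> Bclass1 tY f) ->
  loc_almost_arcwise_connected tY.
Proof.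
  intros HFC HHB y V HV.
  apply NNPP; intro Hno.
  pose proof HV as [W [HWo [HWy HWV]]].
  destruct (HFC y) as [Bs [HB1 HB2]].
  pose proof (Udec_props tY W Bs y HWo HWy HB1) as HU.
  set (U := Udec W Bs) in *.
  assert (Hex : forall n, exists t : ((Y -> Prop) * (Y -> Prop)) * (Y * Y),
     open tY (fst (fst t)) /\ fst (fst t) (fst (snd t)) /\ (forall z, fst (fst t) z -> U n z) /\
     open tY (snd (fst t)) /\ snd (fst t) (snd (snd t)) /\ (forall z, snd (fst t) z -> U n z) /\
     ~ joined_by_arc_in tY (fst (fst t)) (snd (fst t)) (closure tY V)).
  { intros n. destruct (HU n) as [Uo [Uy [UW UB]]].
    apply NNPP; intro Hn. apply Hno. exists (U n). split; [|split].
    - exists (U n). auto.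
    - auto.
    - intros A B HA [a Ha] HAU HB [b Hb] HBU. apply NNPP; intro Hj. apply Hn.
      exists ((A, B), (a, b)). simpl. tauto. }
  set (T := fun n => proj1_sig (constructive_indefinite_description _ (Hex n))).
  assert (HT : forall n, let t := T n in
     open tY (fst (fst t)) /\ fst (fst t) (fst (snd t)) /\ (forall z, fst (fst t) z -> U n z) /\
     open tY (snd (fst t)) /\ snd (fst t) (snd (snd t)) /\ (forall z, snd (fst t) z -> U n z) /\
     ~ joined_by_arc_in tY (fst (fst t)) (snd (fst t)) (closure tY V)).
  { intros n. unfold T. destruct constructive_indefinite_description as [t Ht]. exact Ht. }
  clearbody T.
  set (An := fun n => fst (fst (T n))). set (Bn := fun n => snd (fst (T n))).
  set (a := fun n => fst (snd (T n))). set (b := fun n => snd (snd (T n))).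
  set (f := fdef a b y).
  assert (Ha : forall n, U n (a n)). { intro n. destruct (HT n) as [_ [A [B _]]]. auto. }
  assert (Hb : forall n, U n (b n)). { intro n. destruct (HT n) as [_ [_ [_ [_ [A [B _]]]]]]. auto. }
  assert (HfW : forall x, W (f x)).
  { intros x. destruct (fdef_cases a b y x) as [[n [_ E]]|[[n [_ E]]|[_ [_ E]]]];
      unfold f; rewrite E; auto; apply (HU n); auto. }
  assert (Hf : Hclass1 tY f).
  { intros Ov HO. destruct (classic (Ov y)) as [Hy|Hy].
    - destruct (HB2 Ov HO Hy) as [N HN].
      apply (Fsigma_ext _ _ (Fsigma_cofinite N Pp Qp (fun n => ~ Ov (a n)) (fun n => ~ Ov (b n)))).
      intros x. split.
      + intros H. destruct (fdef_cases a b y x) as [[n [E1 E]]|[[n [E1 E]]|[_ [_ E]]]];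
          unfold f; rewrite E; auto.
        * destruct (Nat.lt_ge_cases n N) as [Hn|Hn].
          -- destruct (H n Hn) as [H1 _]. apply NNPP; intro Hc. exact (H1 Hc E1).
          -- apply HN. apply (HU N). apply (Udec_anti W Bs _ N n Hn). apply Ha.
        * destruct (Nat.lt_ge_cases n N) as [Hn|Hn].
          -- destruct (H n Hn) as [_ H1]. apply NNPP; intro Hc. exact (H1 Hc E1).
          -- apply HN. apply (HU N). apply (Udec_anti W Bs _ N n Hn). apply Hb.
      + intros H n _. split; intros Hc E; apply Hc.
        * unfold f in H. rewrite (fdef_P a b y x n E) in H. exact H.
        * unfold f in H. rewrite (fdef_Q a b y x n E) in H. exact H.
    - apply (Fsigma_ext _ _ (Fsigma_countable Pp Qp (fun n => Ov (a n)) (fun n => Ov (b n)))).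
      intros x. split.
      + intros [n [[E H]|[E H]]]; unfold f.
        * rewrite (fdef_P a b y x n E); auto.
        * rewrite (fdef_Q a b y x n E); auto.
      + intros H. destruct (fdef_cases a b y x) as [[n [E1 E]]|[[n [E1 E]]|[_ [_ E]]]];
          unfold f in H; rewrite E in H.
        * exists n; left; auto.
        * exists n; right; auto.
        * contradiction. }
  destruct (HHB f Hf) as [fn [Hc Hconv]].
  set (E := fun k (x : I01) => forall m, (m >= k)%nat -> closure tY V (fn m x)).
  assert (HEc : forall k, closed01 (E k)).
  { intros k x Hx. unfold E in Hx.
    apply not_all_ex_not in Hx as [m Hm]. apply imply_to_and in Hm as [Hmk Hm].
    apply Ocl_iff in Hm.
    destruct (Hc m (Ocl tY V) (Ocl_open tY V) x Hm) as [e [He He']].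
    exists e. split; auto. intros t Ht HE. apply (Ocl_iff tY V (fn m t)); auto. }
  assert (HEcov : forall x, exists k, E k x).
  { intros x. destruct (Hconv x W HWo (HfW x)) as [N HN]. exists N. intros m Hm.
    apply closure_sup. apply HWV. apply HN; auto. }
  destruct (baire E HEc HEcov) as [k [l [r [Hlr [Hr HE]]]]].
  destruct (PQ_dense l r Hlr Hr) as [n [Hpn Hqn]].
  set (xp := exist (fun x => 0 <= x <= 1) (Pp n) (Pp_range n)).
  set (xq := exist (fun x => 0 <= x <= 1) (Qp n) (Qp_range n)).
  destruct (HT n) as [HAo [HAa [_ [HBo [HBb [_ Hnj]]]]]].
  destruct (Hconv xp (An n) HAo) as [M1 HM1].
  { unfold f. rewrite (fdef_P a b y xp n eq_refl). exact HAa. }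
  destruct (Hconv xq (Bn n) HBo) as [M2 HM2].
  { unfold f. rewrite (fdef_Q a b y xq n eq_refl). exact HBb. }
  apply Hnj.
  set (m := max k (max M1 M2)).
  exists (fun t => fn m (affI (Pp n) (Qp n) (Pp_range n) (Qp_range n) t)).
  split; [apply cont_aff; apply Hc|]. split; [|split].
  - intros t. apply (HE (affI (Pp n) (Qp n) (Pp_range n) (Qp_range n) t)).
    + simpl. destruct t as [t ht]; simpl. apply aff_between; lra.
    + unfold m; lia.
  - assert (h0 : 0 <= 0 <= 1) by lra.
    exists (exist _ 0 h0). split; [reflexivity|].
    replace (affI (Pp n) (Qp n) (Pp_range n) (Qp_range n) (exist _ 0 h0)) with xp.
    + apply HM1. unfold m; lia.
    + apply I01_eq. simpl. ring.
  - assert (h1 : 0 <= 1 <= 1) by lra.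
    exists (exist _ 1 h1). split; [reflexivity|].
    replace (affI (Pp n) (Qp n) (Pp_range n) (Qp_range n) (exist _ 1 h1)) with xq.
    + apply HM2. unfold m; lia.
    + apply I01_eq. simpl. ring.
Qed.

Theorem mainTheorem11 (Y : Type) (tY : topology Y) :
  first_countable tY ->
  (forall f : I01 -> Y, Hclass1 tY f -> Bclass1 tY f) ->
  almost_arcwise_connected tY /\ loc_almost_arcwise_connected tY.
Proof.
  intros H1 H2. split; [apply global_part | apply local_part]; auto.
Qed.
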